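(* For every $m\in\mathbb{N}$ the set $$X_m:=\left\{\sum_{i=1}^m\frac{d_i}{2^{i}}:\ d_{i}\in\{0\}\cup \{t_{k,n}:k\ge0,n\ge1\}\right\}$$ is nowhere dense in $\mathbb{R}$.
   Context: For $k\ge 0$ and $n\ge 1$, $t_{k,n}:=\frac{1}{2^k n}$. *)

(* Defs.v *)
From Stdlib Require Import Reals Rtopology.
Open Scope R_scope.

Definition t (k n : nat) : R := 1 / (2 ^ k * INR n).

Definition digit (d : R) : Prop :=
  d = 0 \/ exists k n : nat, (1 <= n)%nat /\ d = t k n.

Fixpoint dsum (d : nat -> R) (m : nat) : R :=
  match m with
  | O => 0
  | S m' => dsum d m' + d (S m') / 2 ^ (S m')
  end.

Definition X (m : nat) (x : R) : Prop :=
  exists d : nat -> R,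
    (forall i : nat, (1 <= i <= m)%nat -> digit (d i)) /\ x = dsum d m.

Definition nowhere_dense (A : R -> Prop) : Prop :=
  forall x : R, ~ interior (adherence A) x.

(* Main.v *)
Require Import Defs.
From Stdlib Require Import Reals Rtopology ZArith Lia Lra Psatz Classical.
Open Scope R_scope.

Lemma no_sqrt2_Z : forall q : Z, (0 <= q)%Z -> forall p : Z, (p*p = 2*q*q)%Z -> q = 0%Z.
Proof.
  intros q Hq. generalize Hq. pattern q. apply Z_lt_induction; [|exact Hq].
  clear q Hq. intros q IH H0 p Hp.
  destruct (Z.Even_or_Odd p) as [[a Ha]|[a Ha]]; subst p.
  - assert (Hq2 : (q*q = 2*a*a)%Z) by lia.
    destruct (Z.eq_dec q 0) as [E|E]; [exact E|].
    assert (Ha' : (0 <= Z.abs a < q)%Z) by nia.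
    assert (Z.abs a = 0)%Z.
    { apply (IH (Z.abs a) Ha' (proj1 Ha') q). nia. }
    nia.
  - exfalso. nia.
Qed.

Definition Rat (x : R) := exists p q : Z, (0 < q)%Z /\ x * IZR q = IZR p.

Lemma Rat_add x y : Rat x -> Rat y -> Rat (x + y).
Proof.
  intros [p1 [q1 [H1 E1]]] [p2 [q2 [H2 E2]]].
  exists (p1*q2 + p2*q1)%Z, (q1*q2)%Z. split; [lia|].
  rewrite plus_IZR, !mult_IZR. rewrite <- E1, <- E2. ring.
Qed.

Lemma Rat_opp x : Rat x -> Rat (- x).
Proof.
  intros [p [q [H E]]]. exists (-p)%Z, q. split; [lia|]. rewrite opp_IZR, <- E. ring.
Qed.

Lemma sqrt2_irr : ~ Rat (sqrt 2).
Proof.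
  intros [p [q [H E]]].
  assert (Hq : IZR q > 0) by (apply IZR_lt; lia).
  assert (Hs : sqrt 2 * sqrt 2 = 2) by (apply sqrt_sqrt; lra).
  assert (Hp : IZR p >= 0).
  { rewrite <- E. assert (0 <= sqrt 2) by apply sqrt_pos. nra. }
  assert (E2 : IZR (p*p) = IZR (2*q*q)).
  { rewrite !mult_IZR. rewrite <- E. replace (IZR 2) with 2 by reflexivity.
    transitivity ((sqrt 2 * sqrt 2) * (IZR q * IZR q)); [ring|]. rewrite Hs; ring. }
  apply eq_IZR in E2.
  assert (Hp0 : (0 <= p)%Z) by (apply le_IZR; lra). assert (q = 0)%Z by (apply (no_sqrt2_Z q ltac:(lia) p); lia). lia.
Qed.

Lemma Rat_scale x (N : nat) : (0 < N)%nat -> Rat (x / INR N) -> Rat x.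
Proof.
  intros HN [p [q [H E]]]. exists (p * Z.of_nat N)%Z, q. split; [lia|].
  rewrite mult_IZR, <- E, <- INR_IZR_INZ.
  assert (INR N > 0) by (apply lt_0_INR; lia). field. lra.
Qed.

Lemma irr_in_interval a b : a < b -> exists r, a < r < b /\ ~ Rat r.
Proof.
  intros Hab.
  destruct (archimed (3 / (b - a))) as [H1 _].
  set (N := Z.to_nat (up (3 / (b - a)))).
  assert (HN : INR N > 3 / (b-a)).
  { unfold N. rewrite INR_IZR_INZ. rewrite Z2Nat.id; [lra|].
    apply le_IZR. assert (3/(b-a) > 0) by (apply Rdiv_lt_0_compat; lra). lra. }
  assert (Hpos : 3 / (b-a) > 0) by (apply Rdiv_lt_0_compat; lra).
  assert (HN0 : (0 < N)%nat) by (apply INR_lt; simpl; lra).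
  assert (HNr : INR N > 0) by lra.
  assert (Hs1 : 1 < sqrt 2) by (rewrite <- sqrt_1; apply sqrt_lt_1; lra).
  assert (Hs2 : sqrt 2 < 3/2).
  { apply Rsqr_incrst_0. rewrite Rsqr_sqrt; [|lra]. unfold Rsqr; lra. apply sqrt_pos. lra. }
  assert (Hb : 3 < INR N * (b - a)).
  { apply (Rmult_lt_compat_r (b-a)) in HN; [|lra].
    unfold Rdiv in HN. rewrite Rmult_assoc, Rinv_l in HN; lra. }
  assert (Hk : 2 * sqrt 2 / INR N < b - a).
  { apply (Rmult_lt_reg_r (INR N)); [lra|]. unfold Rdiv.
    rewrite Rmult_assoc, Rinv_l; lra. }
  assert (Hk0 : 0 < sqrt 2 / INR N) by (apply Rdiv_lt_0_compat; lra).
  destruct (classic (Rat (a + sqrt 2 / INR N))) as [R1|R1].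
  - exists (a + 2 * sqrt 2 / INR N). split.
    + split; [|lra]. unfold Rdiv in *. nra.
    + intro R2. apply sqrt2_irr. apply (Rat_scale _ N HN0).
      replace (sqrt 2 / INR N) with ((a + 2 * sqrt 2 / INR N) + - (a + sqrt 2 / INR N)) by (field; lra).
      apply Rat_add; auto. apply Rat_opp; auto.
  - exists (a + sqrt 2 / INR N). split; [|auto]. split; [lra|].
    unfold Rdiv in *. nra.
Qed.

Lemma dsum_ext d e m : (forall i, (1 <= i <= m)%nat -> d i = e i) -> dsum d m = dsum e m.
Proof.
  induction m; intros H; simpl; auto.
  rewrite IHm by (intros; apply H; lia). rewrite H by lia. reflexivity.
Qed.

Lemma X_S m x : X (S m) x <-> exists a e, X m a /\ digit e /\ x = a + e / 2 ^ (S m).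
Proof.
  split.
  - intros [d [Hd Ex]]. exists (dsum d m), (d (S m)). repeat split.
    + exists d. split; auto. intros; apply Hd; lia.
    + apply Hd; lia.
    + exact Ex.
  - intros [a [e [[d [Hd Ea]] [He Ex]]]].
    exists (fun i => if Nat.eqb i (S m) then e else d i). split.
    + intros i Hi. destruct (Nat.eqb_spec i (S m)); auto. apply Hd; lia.
    + simpl. rewrite Nat.eqb_refl. rewrite Ex, Ea. f_equal.
      apply dsum_ext. intros i Hi. destruct (Nat.eqb_spec i (S m)); [lia|auto].
Qed.

Lemma pow2_IZR k : 2 ^ k = IZR (2 ^ Z.of_nat k).
Proof. rewrite <- pow_IZR. reflexivity. Qed.

Lemma Rat_digit e i : digit e -> Rat (e / 2 ^ i).
Proof.
  intros [->|[k [n [Hn ->]]]].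
  - exists 0%Z, 1%Z. split; [lia|]. simpl. unfold Rdiv. ring.
  - exists 1%Z, (2 ^ Z.of_nat k * Z.of_nat n * 2 ^ Z.of_nat i)%Z. split.
    + assert (0 < 2 ^ Z.of_nat k)%Z by (apply Z.pow_pos_nonneg; lia).
      assert (0 < 2 ^ Z.of_nat i)%Z by (apply Z.pow_pos_nonneg; lia). nia.
    + rewrite !mult_IZR, <- !pow2_IZR, <- INR_IZR_INZ. unfold t.
      assert (INR n > 0) by (apply lt_0_INR; lia).
      assert (2 ^ k > 0) by (apply pow_lt; lra).
      assert (2 ^ i > 0) by (apply pow_lt; lra).
      simpl. field. lra.
Qed.

Lemma X_Rat m x : X m x -> Rat x.
Proof.
  revert x; induction m; intros x Hx.
  - destruct Hx as [d [_ ->]]. exists 0%Z, 1%Z. split; [lia|]. simpl. ring.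
  - apply X_S in Hx. destruct Hx as [a [e [Ha [He ->]]]].
    apply Rat_add; [auto|]. apply Rat_digit; auto.
Qed.

Lemma not_adh (A : R -> Prop) z : ~ adherence A z ->
  exists eps, eps > 0 /\ forall y, Rabs (y - z) < eps -> ~ A y.
Proof.
  intros H. apply not_all_ex_not in H. destruct H as [V HV].
  apply imply_to_and in HV. destruct HV as [[del Hdel] HV].
  exists del. split; [apply cond_pos|]. intros y Hy Ay. apply HV.
  exists y. split; [apply Hdel; exact Hy|exact Ay].
Qed.

Lemma fin1 (Q : nat -> R -> Prop) :
  (forall i e e', 0 < e' <= e -> Q i e -> Q i e') ->
  (forall i, exists e, e > 0 /\ Q i e) ->
  forall N, exists e, e > 0 /\ forall i, (i <= N)%nat -> Q i e.
Proof.
  intros Hm Hex N. induction N.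
  - destruct (Hex 0%nat) as [e [He Q0]]. exists e. split; auto.
    intros i Hi. replace i with 0%nat by lia. auto.
  - destruct IHN as [e1 [He1 Q1]]. destruct (Hex (S N)) as [e2 [He2 Q2]].
    exists (Rmin e1 e2). split. { apply Rmin_glb_lt; auto. }
    intros i Hi. destruct (Nat.eq_dec i (S N)) as [->|Hne].
    + apply (Hm _ e2); auto. split; [apply Rmin_glb_lt; auto|apply Rmin_r].
    + apply (Hm _ e1); [split; [apply Rmin_glb_lt; auto|apply Rmin_l]|]. apply Q1; lia.
Qed.

Lemma fin2 (Q : nat -> nat -> R -> Prop) :
  (forall i j e e', 0 < e' <= e -> Q i j e -> Q i j e') ->
  (forall i j, exists e, e > 0 /\ Q i j e) ->
  forall N, exists e, e > 0 /\ forall i j, (i <= N)%nat -> (j <= N)%nat -> Q i j e.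
Proof.
  intros Hm Hex N.
  destruct (fin1 (fun i e => forall j, (j <= N)%nat -> Q i j e)) with (N := N) as [e [He H]].
  - intros i e e' He' H j Hj. apply (Hm _ _ e); auto.
  - intros i. apply (fin1 (fun j e => Q i j e)); auto.
    intros; eapply Hm; eauto.
  - exists e; split; auto.
Qed.

Lemma X_closed m x : adherence (X m) x -> X m x.
Proof.
  revert x. induction m; intros x Hx.
  - apply NNPP. intro Hn.
    assert (Hx0 : x <> 0) by (intro; apply Hn; exists (fun _ => 0); split; [intros; lia|simpl; auto]).
    assert (Hp : Rabs x > 0) by (apply Rabs_pos_lt; auto).
    destruct (Hx (disc x (mkposreal _ Hp))) as [y [Hy1 Hy2]].
    + exists (mkposreal _ Hp). intros z Hz; exact Hz.
    + destruct Hy2 as [d [_ Ey]]. simpl in Ey. subst y. unfold disc in Hy1. simpl in Hy1.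
      rewrite Rminus_0_l, Rabs_Ropp in Hy1. lra.
  - apply NNPP. intro Hn. revert Hx. apply ex_not_not_all.
    set (M := 2 ^ S m).
    assert (HM : M > 0) by (apply pow_lt; lra).
    assert (Hback : forall a e, X m a -> digit e -> x <> a + e / M).
    { intros a e Ha He E. apply Hn. apply X_S. exists a, e. auto. }
    assert (Hcl : forall z, ~ X m z -> exists eps, eps > 0 /\ forall y, Rabs (y - z) < eps -> ~ X m y).
    { intros z Hz. apply not_adh. intro H. apply Hz. apply IHm. exact H. }
    destruct (Hcl x) as [r [Hr Hr']].
    { intro H. apply (Hback x 0); auto. left; auto. unfold Rdiv; ring. }
    destruct (fin2 (fun k n eps => (1 <= n)%nat -> forall y, Rabs (y - (x - t k n / M)) < eps -> ~ X m y))
      with (N := Z.to_nat (up (2 / (r * M)))) as [eps [Heps Q]].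
    + intros i j e e' He' H Hn1 y Hy. apply H; auto. lra.
    + intros k n. destruct (le_lt_dec 1 n) as [Hn1|Hn1].
      * destruct (Hcl (x - t k n / M)) as [e [He He']].
        { intro H. apply (Hback _ (t k n) H). right; exists k, n; auto. ring. }
        exists e. split; auto.
      * exists 1. split; [lra|]. intros; lia.
    + set (N := Z.to_nat (up (2 / (r * M)))) in Q.
      assert (HrM : 2 / (r * M) > 0) by (apply Rdiv_lt_0_compat; [lra| apply Rmult_lt_0_compat; lra]).
      assert (HN : INR N > 2 / (r * M)).
      { unfold N. destruct (archimed (2 / (r * M))) as [H1 _].
        rewrite INR_IZR_INZ, Z2Nat.id; [lra|]. apply le_IZR. lra. }
      assert (Hmin : 0 < Rmin (r/2) eps) by (apply Rmin_glb_lt; lra).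
      exists (disc x (mkposreal _ Hmin)). intros H.
      destruct H as [y [Hy Xy]].
      { exists (mkposreal _ Hmin). intros z Hz; exact Hz. }
      unfold disc in Hy; simpl in Hy.
      assert (Hy1 : Rabs (y - x) < r/2) by (eapply Rlt_le_trans; [exact Hy|apply Rmin_l]).
      assert (Hy2 : Rabs (y - x) < eps) by (eapply Rlt_le_trans; [exact Hy|apply Rmin_r]).
      apply X_S in Xy. destruct Xy as [a [e [Ha [He Ey]]]]. fold M in Ey.
      destruct He as [->|[k [n [Hn1 ->]]]].
      * apply (Hr' a); auto. replace (a - x) with (y - x) by (rewrite Ey; unfold Rdiv; ring). lra.
      * assert (HINR : INR n >= 1) by (apply Rle_ge; replace 1 with (INR 1) by reflexivity; apply le_INR; lia).
        assert (H2k : 2 ^ k >= 1) by (apply Rle_ge, pow_R1_Rle; lra).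
        assert (Ht : t k n > 0) by (unfold t; apply Rdiv_lt_0_compat; [lra|nra]).
        assert (HtM : t k n / M > 0) by (apply Rdiv_lt_0_compat; lra).
        destruct (Rlt_or_le (t k n / M) (r/2)) as [Hs|Hs].
        -- apply (Hr' a); auto.
           assert (Hax : a - x = (y - x) - t k n / M) by (rewrite Ey; ring).
           rewrite Hax. eapply Rle_lt_trans; [apply Rabs_triang|].
           rewrite Rabs_Ropp, (Rabs_right (t k n / M)); lra.
        --
           assert (Hb : 2 ^ k * INR n <= 2 / (r * M)).
           { assert (HP : 2 ^ k * INR n > 0) by nra.
             assert (Htv : t k n * (2 ^ k * INR n) = 1) by (unfold t; field; lra).
             assert (Hq : r / 2 * M <= t k n).
             { apply (Rmult_le_compat_r M) in Hs; [|lra].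
               replace (t k n / M * M) with (t k n) in Hs by (field; lra). lra. }
             assert (Hq2 : r / 2 * M * (2 ^ k * INR n) <= 1).
             { rewrite <- Htv. apply Rmult_le_compat_r; lra. }
             assert (Hr2 : r * M > 0) by nra.
             apply (Rmult_le_reg_l (r * M)); auto.
             replace (r * M * (2 / (r * M))) with 2 by (field; lra). nra. }
           assert (HkN : (k <= N)%nat).
           { assert (Hk : (k < 2 ^ k)%nat) by (apply Nat.pow_gt_lin_r; lia).
             apply lt_INR in Hk. rewrite pow_INR in Hk. simpl in Hk.
             replace (1+1) with 2 in Hk by ring.
             apply INR_le. nra. }
           assert (HnN : (n <= N)%nat) by (apply INR_le; nra).
           apply (Q k n HkN HnN Hn1 a); auto.
           replace (a - (x - t k n / M)) with (y - x) by (rewrite Ey; ring). exact Hy2.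
Qed.

Theorem lemma2p2 : forall m : nat, nowhere_dense (X m).
Proof.
  intros m x [del Hdel].
  assert (Hd : x - del < x + del) by (destruct del; simpl; lra).
  destruct (irr_in_interval _ _ Hd) as [r [Hr Hnr]].
  apply Hnr. apply (X_Rat m). apply X_closed. apply Hdel.
  unfold disc. apply Rabs_def1; lra.
Qed.
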